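(* Let $d\ge0$ be an even integer and $\lambda\in(0,\infty)\setminus\mathbb{N}$ with $d\le -2+2\left\lfloor\frac{\lambda+1}{2}\right\rfloor$. Then $S_{d,\mathbf{w}^\lambda}=S_{d+1,\mathbf{w}^\lambda}$.
   Context: Let $\phi:[0,1]\to(0,1]$ be non-increasing with $\phi(0)=1$ (in particular positive on $[0,1)$), $\omega(x)=\phi(|x|)$ for $|x|\le1$ and $0$ otherwise, and $w^\lambda_m=\omega(m/\lambda)$, $m\in\mathbb{Z}$. For an integer $e\ge0$ let $\Pi_e$ be the real polynomials of degree at most $e$. For $i\in\{0,1\}$ let $M_i=\{m\in\mathbb{Z}: m\equiv i\pmod 2,\ |m|<\lambda\}$. The weighted local polynomial regression scheme $S_{e,\mathbf{w}^\lambda}$ maps a real sequence $\mathbf{f}=(f_j)_{j\in\mathbb{Z}}$ to $(S\mathbf{f})_{2j+i}=\hat p(0)$ ($i\in\{0,1\}$, $j\in\mathbb{Z}$), where $\hat p$ is a minimizer of $\sum_{m\in M_i} w^\lambda_m(f_{j+(m+i)/2}-p(m))^2$ over $p\in\Pi_e$ (when the minimizer is not unique, $\hat p$ is an interpolating polynomial and its value at $0$ is independent of the choice). *)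

(* Defs.v *)
From HB Require Import structures.
From mathcomp Require Import all_boot all_order all_algebra.
From mathcomp Require Import boolp classical_sets reals.
Set Implicit Arguments. Unset Strict Implicit. Unset Printing Implicit Defensive.
Import Order.TTheory GRing.Theory Num.Theory.
Local Open Scope ring_scope.

Section LPR.
Variable R : realType.

Definition omega (phi : R -> R) (x : R) : R :=
  if `|x| <= 1 then phi `|x| else 0.

Definition wlam (phi : R -> R) (lam : R) (m : int) : R := omega phi (m%:~R / lam).

(* a bound N (natural) such that every integer m with |m| < lam satisfies |m| <= N *)
Definition Nbound (lam : R) : nat := `|Num.floor lam|%N.+1.

Definition inM (lam : R) (i : int) (m : int) : bool :=
  ((m %% 2)%Z == i) && (`|m%:~R : R| < lam).

(* the weighted least squares functional
   sum_{m in M_i} w_m (f_{j+(m+i)/2} - p(m))^2 ;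
   m ranges over -N..N (with N = Nbound lam) which contains M_i *)
Definition lpr_cost (phi : R -> R) (lam : R) (f : int -> R) (i j : int)
    (p : {poly R}) : R :=
  \sum_(k < (Nbound lam).*2.+1 | inM lam i (k%:Z - (Nbound lam)%:Z))
     wlam phi lam (k%:Z - (Nbound lam)%:Z) *
     (f (j + ((k%:Z - (Nbound lam)%:Z + i) %/ 2)%Z)
        - p.[(k%:Z - (Nbound lam)%:Z)%:~R]) ^+ 2.

Definition lpr_minimizer (e : nat) (phi : R -> R) (lam : R) (f : int -> R)
    (i j : int) (p : {poly R}) : Prop :=
  (size p <= e.+1)%N /\
  forall q : {poly R}, (size q <= e.+1)%N ->
    lpr_cost phi lam f i j p <= lpr_cost phi lam f i j q.

(* The value at 0 is (by the paper) independent of the minimizer; we select it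
   by classical choice (xget), defaulting to 0 if no minimizer existed. *)
Definition lpr_scheme (e : nat) (phi : R -> R) (lam : R) (f : int -> R)
    (n : int) : R :=
  let i := (n %% 2)%Z in
  let j := (n %/ 2)%Z in
  xget 0 [set v | exists p, lpr_minimizer e phi lam f i j p /\ p.[0] = v].

End LPR.

(* Main.v *)
From HB Require Import structures.
From mathcomp Require Import all_boot all_order all_algebra.
From mathcomp Require Import boolp classical_sets reals.
From mathcomp Require Import ring lra zify.
Require Import Defs.
Set Implicit Arguments. Unset Strict Implicit. Unset Printing Implicit Defensive.
Import Order.TTheory GRing.Theory Num.Theory.
Local Open Scope ring_scope.

Section Gen.
Variable R : realFieldType.
Implicit Types (p q a b : {poly R}).

Lemma quad_bnd (m c b a : R) :
  (forall t, m <= c + t * b + t ^+ 2 * a) -> 0 <= a /\ (a = 0 -> b = 0).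
Proof.
move=> H; split.
  rewrite leNgt; apply/negP => ha.
  pose T := (`|m - c| + 1) / (- a) + 1.
  have hT0 : 0 <= (`|m - c| + 1) / (- a).
    apply: divr_ge0; last lra.
    have := normr_ge0 (m - c); lra.
  have hT1 : 1 <= T by rewrite /T; lra.
  have hTa : T * a = - (`|m - c| + 1) + a.
    rewrite /T mulrDl mul1r; congr (_ + _).
    field; by rewrite lt_eqF.
  have h1 := H T; have h2 := H (- T).
  have hs : m - c <= T ^+ 2 * a.
    have : 2 * m <= 2 * c + 2 * (T ^+ 2 * a) by rewrite sqrrN in h2; lra.
    lra.
  have hT2 : T ^+ 2 * a <= T * a.
    have h0 : 0 <= T * (T - 1) by apply: mulr_ge0; lra.
    have h3 : T * (T - 1) * a <= 0 by apply: mulr_ge0_le0; lra.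
    have -> : T ^+ 2 * a = T * (T - 1) * a + T * a by ring.
    lra.
  have := ler_norm (c - m); rewrite distrC; lra.
move=> ha; apply/eqP; apply/negP => hb.
have := H ((m - c - 1) / b).
rewrite ha mulr0 addr0.
rewrite divfK; last exact/negP.
move=> h; lra.
Qed.

Definition quadratic (F : {poly R} -> R) :=
  exists (B : {poly R} -> {poly R} -> R) (l : {poly R} -> R) (g : R),
  [/\ forall (c : R) p q r, B (c *: p + q) r = c * B p r + B q r,
      forall p q, B p q = B q p,
      forall (c : R) p q, l (c *: p + q) = c * l p + l q &
      forall p, F p = B p p + l p + g].

Lemma quad_line (F : {poly R} -> R) (B : {poly R} -> {poly R} -> R) (l : {poly R} -> R) (g : R) :
  (forall (c : R) p q r, B (c *: p + q) r = c * B p r + B q r) ->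
  (forall p q, B p q = B q p) ->
  (forall (c : R) p q, l (c *: p + q) = c * l p + l q) ->
  (forall p, F p = B p p + l p + g) ->
  forall p e t, F (p + t *: e) = F p + t * (2 * B p e + l e) + t ^+ 2 * B e e.
Proof.
move=> HB HS Hl HF p e t.
rewrite !HF (addrC p (t *: e)) HB Hl (HS e (t *: e + p)) (HS p (t *: e + p)).
rewrite !HB (HS e p); ring.
Qed.

Lemma size_split n (p : {poly R}) : (size p <= n.+1)%N ->
  (size (p - p`_n *: 'X^n)%R <= n)%N.
Proof.
move=> hp; apply/leq_sizeP => j hj.
rewrite coefB coefZ coefXn.
case: (eqVneq j n) => [->|hjn]; first by rewrite mulr1 subrr.
rewrite mulr0 subr0; move/leq_sizeP: hp; apply.
by rewrite ltn_neqAle eq_sym hjn.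
Qed.

Lemma size_join n (p : {poly R}) t : (size p <= n)%N ->
  (size (p + t *: 'X^n)%R <= n.+1)%N.
Proof.
move=> hp; apply: leq_trans (size_polyD _ _) _.
rewrite geq_max (leq_trans hp) //=.
by apply: leq_trans (size_scale_leq _ _) _; rewrite size_polyXn.
Qed.

Lemma quad_min n : forall F, quadratic F ->
  (exists m : R, forall p : {poly R}, (size p <= n)%N -> m <= F p) ->
  exists p0 : {poly R}, (size p0 <= n)%N /\ forall p : {poly R}, (size p <= n)%N -> F p0 <= F p.
Proof.
elim: n => [|n IH] F [B [l [g [HB HS Hl HF]]]] [m Hm].
  exists 0; split; first by rewrite size_poly0.
  move=> p; rewrite leqn0 size_poly_eq0 => /eqP ->; exact: lexx.
have HL := quad_line HB HS Hl HF.
set e : {poly R} := 'X^n.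
have bnd : forall p : {poly R}, (size p <= n)%N ->
    0 <= B e e /\ (B e e = 0 -> 2 * B p e + l e = 0).
  move=> p hp; apply: (@quad_bnd m (F p)) => t.
  by rewrite -HL; apply: Hm; apply: size_join.
have dec : forall p : {poly R}, (size p <= n.+1)%N ->
    p = (p - p`_n *: e) + p`_n *: e by move=> p _; rewrite subrK.
have [ha0|hapos] := eqVneq (B e e) 0.
  have Hq : quadratic F by exists B, l, g.
  have [p0 [hp0 Hp0]] := IH F Hq (ex_intro _ m (fun p hp => Hm p (leqW hp))).
  exists p0; split; first exact: leqW.
  move=> p hp; rewrite (dec p hp) HL ha0 mulr0 addr0.
  have [_ /(_ ha0) ->] := bnd _ (size_split hp).
  by rewrite mulr0 addr0; apply: Hp0; apply: size_split.
have ha : 0 < B e e by rewrite lt_def hapos; case: (bnd 0); rewrite ?size_poly0.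
pose a := B e e.
have an0 : a != 0 by rewrite /a gt_eqF.
pose tau (p : {poly R}) := - (2 * B p e + l e) / (2 * a).
pose G (p : {poly R}) := F (p + tau p *: e).
have HG : forall p : {poly R}, G p = F p - (2 * B p e + l e) ^+ 2 / (4 * a).
  move=> p; rewrite /G HL /tau -/a; by field.
have Gq : quadratic G.
  exists (fun p q : {poly R} => B p q - B p e * B q e / a),
         (fun p : {poly R} => l p - l e / a * B p e), (g - l e ^+ 2 / (4 * a)); split.
  - move=> c p q r /=; rewrite !HB; by field.
  - by move=> p q /=; rewrite (HS p q) [B p e * _]mulrC.
  - move=> c p q /=; rewrite Hl HB; by field.
  - move=> p /=; rewrite HG HF; by field.
have [p0 [hp0 Hp0]] : exists p0 : {poly R}, (size p0 <= n)%N /\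
    forall p : {poly R}, (size p <= n)%N -> G p0 <= G p.
  apply: IH => //; exists m => p hp; apply: Hm; exact: size_join.
exists (p0 + tau p0 *: e); split; first exact: size_join.
move=> p hp; rewrite (dec p hp).
have := Hp0 _ (size_split hp); rewrite -/e.
move: (p - p`_n *: e) => q.
rewrite -/(G p0) !HG HL -/a.
set bb := 2 * B q e + l e; set t := p`_n.
move=> h.
have : 0 <= (2 * a * t + bb) ^+ 2 / (4 * a).
  by apply: divr_ge0; [apply: sqr_ge0 | rewrite /a; lra].
have -> : (2 * a * t + bb) ^+ 2 / (4 * a) = t * bb + t ^+ 2 * a + bb ^+ 2 / (4 * a).
  by field.
lra.
Qed.

Definition ev (p : {poly R}) := \poly_(i < size p) (if odd i then 0 else p`_i).
Definition od (p : {poly R}) := \poly_(i < size p) (if odd i then p`_i else 0).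

Lemma coef_ev p k : (ev p)`_k = if odd k then 0 else p`_k.
Proof.
rewrite coef_poly; case: ltnP => // hk.
by rewrite nth_default //; case: odd.
Qed.

Lemma coef_od p k : (od p)`_k = if odd k then p`_k else 0.
Proof.
rewrite coef_poly; case: ltnP => // hk.
by rewrite nth_default //; case: odd.
Qed.

Lemma evod p : ev p + od p = p.
Proof. by apply/polyP => k; rewrite coefD coef_ev coef_od; case: odd; rewrite ?add0r ?addr0. Qed.

Lemma ev_evod a b : ev (ev a + od b) = ev a.
Proof.
by apply/polyP => k; rewrite !coef_ev coefD coef_ev coef_od; case: odd; rewrite ?addr0.
Qed.

Lemma od_evod a b : od (ev a + od b) = od b.
Proof.
by apply/polyP => k; rewrite !coef_od coefD coef_ev coef_od; case: odd; rewrite ?add0r.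
Qed.

Lemma ev_ev p : ev (ev p) = ev p.
Proof. by apply/polyP => k; rewrite !coef_ev; case: odd. Qed.

Lemma size_ev p : (size (ev p) <= size p)%N.
Proof. exact: size_poly. Qed.

Lemma size_od p : (size (od p) <= size p)%N.
Proof. exact: size_poly. Qed.

Lemma size_ev_even d p : ~~ odd d -> (size p <= d.+2)%N -> (size (ev p) <= d.+1)%N.
Proof.
move=> hd /leq_sizeP hp; apply/leq_sizeP => k hk; rewrite coef_ev.
case: (eqVneq k d.+1) => [->|hk1]; first by rewrite /= hd.
by rewrite hp; [case: odd | rewrite ltn_neqAle eq_sym hk1].
Qed.

Lemma od_at0 p : (od p).[0] = 0.
Proof. by rewrite horner_coef0 coef_od. Qed.

Lemma ev_at0 p : (ev p).[0] = p.[0].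
Proof. by rewrite !horner_coef0 coef_ev. Qed.

Lemma ev_sym p x : (ev p).[- x] = (ev p).[x].
Proof.
rewrite !(horner_coef_wide _ (size_ev p)); apply: eq_bigr => i _.
rewrite coef_ev exprNn -signr_odd; case: (odd i); first by rewrite !mul0r.
by rewrite expr0 mul1r.
Qed.

Lemma od_sym p x : (od p).[- x] = - (od p).[x].
Proof.
rewrite !(horner_coef_wide _ (size_od p)) -sumrN; apply: eq_bigr => i _.
rewrite coef_od exprNn -signr_odd; case: (odd i); last by rewrite !mul0r oppr0.
by rewrite expr1 mulN1r mulrN.
Qed.

Definition ismin (F : {poly R} -> R) n p :=
  (size p <= n)%N /\ forall q : {poly R}, (size q <= n)%N -> F p <= F q.

Section Split.
Variable F : {poly R} -> R.
Hypothesis hF : forall a b, F (ev a + od b) = F (ev a) + F (od b) - F 0.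

Lemma Fsplit p : F p = F (ev p) + F (od p) - F 0.
Proof. by rewrite -hF evod. Qed.

Lemma min_ev n p : ismin F n p -> forall q, (size q <= n)%N -> F (ev p) <= F (ev q).
Proof.
move=> [hp Hp] q hq.
have : F p <= F (ev q + od p).
  apply: Hp; apply: leq_trans (size_polyD _ _) _.
  by rewrite geq_max (leq_trans (size_ev _)) // (leq_trans (size_od _)).
rewrite hF Fsplit; lra.
Qed.

Lemma min_od n p : ismin F n p -> forall q, (size q <= n)%N -> F (od p) <= F (od q).
Proof.
move=> [hp Hp] q hq.
have : F p <= F (ev p + od q).
  apply: Hp; apply: leq_trans (size_polyD _ _) _.
  by rewrite geq_max (leq_trans (size_ev _)) // (leq_trans (size_od _)).
rewrite hF Fsplit; lra.
Qed.

Lemma min_of n p : (size p <= n)%N ->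
  (forall q, (size q <= n)%N -> F (ev p) <= F (ev q)) ->
  (forall q, (size q <= n)%N -> F (od p) <= F (od q)) -> ismin F n p.
Proof.
move=> hp He Ho; split => // q hq.
rewrite (Fsplit p) (Fsplit q).
have := He q hq; have := Ho q hq; lra.
Qed.

Hypothesis Fq : quadratic F.
Hypothesis Fpos : forall p, 0 <= F p.

Lemma ex_min n : exists p, ismin F n p.
Proof.
have [|p [hp Hp]] := @quad_min n F Fq; first by exists 0 => p _; apply: Fpos.
by exists p.
Qed.

Lemma sets_eq d : ~~ odd d ->
  [set v : R | exists p, ismin F d.+1 p /\ p.[0] = v]%classic =
  [set v : R | exists p, ismin F d.+2 p /\ p.[0] = v]%classic.
Proof.
move=> hd; apply/seteqP; split => v [p [hp <-]].
  have [P hP] := ex_min d.+2.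
  exists (ev p + od P); split; last by rewrite hornerD od_at0 ev_at0 addr0.
  apply: min_of.
  - apply: leq_trans (size_polyD _ _) _.
    rewrite geq_max (leq_trans (size_ev _)) ?(leq_trans (size_od _)) //.
      by case: hP.
    by apply: leqW; case: hp.
  - move=> q hq; rewrite ev_evod.
    have := min_ev hp (size_ev_even hd hq); by rewrite ev_ev.
  - move=> q hq; rewrite od_evod; exact: min_od hP q hq.
have [Q hQ] := ex_min d.+1.
exists (ev p + od Q); split; last by rewrite hornerD od_at0 ev_at0 addr0.
apply: min_of.
- apply: leq_trans (size_polyD _ _) _.
  rewrite geq_max (size_ev_even hd) ?(leq_trans (size_od _)) //.
    by case: hQ.
  by case: hp.
- move=> q hq; rewrite ev_evod; exact: min_ev hp q (leqW hq).
- move=> q hq; rewrite od_evod; exact: min_od hQ q hq.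
Qed.
End Split.

Section W.
Variables (K : nat) (P : pred 'I_K) (w g x : 'I_K -> R).

Definition wcost p := \sum_(k < K | P k) w k * (g k - p.[x k]) ^+ 2.

Lemma wcost_quad : quadratic wcost.
Proof.
exists (fun p q => \sum_(k < K | P k) w k * (p.[x k] * q.[x k])),
       (fun p => \sum_(k < K | P k) (- 2) * w k * g k * p.[x k]),
       (\sum_(k < K | P k) w k * g k ^+ 2); split.
- move=> c p q r; rewrite mulr_sumr -big_split; apply: eq_bigr => k _ /=.
  rewrite hornerD hornerZ; ring.
- move=> p q /=; apply: eq_bigr => k _ /=; ring.
- move=> c p q; rewrite mulr_sumr -big_split; apply: eq_bigr => k _ /=.
  rewrite hornerD hornerZ; ring.
- move=> p; rewrite /wcost -!big_split; apply: eq_bigr => k _ /=; ring.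
Qed.

Lemma wcost_cross u v : wcost (u + v) =
  wcost u + wcost v - wcost 0 + 2 * \sum_(k < K | P k) w k * (u.[x k] * v.[x k]).
Proof.
rewrite /wcost mulr_sumr -big_split -sumrB -big_split; apply: eq_bigr => k _ /=.
rewrite hornerD horner0; ring.
Qed.

Lemma wcost_ge0 p : (forall k, P k -> 0 <= w k) -> 0 <= wcost p.
Proof.
move=> hw; apply: sumr_ge0 => k hk; apply: mulr_ge0; [exact: hw | exact: sqr_ge0].
Qed.

Lemma sum_odd (h : 'I_K -> R) : (forall k, P (rev_ord k) = P k) ->
  (forall k, P k -> h (rev_ord k) = - h k) -> \sum_(k < K | P k) h k = 0.
Proof.
move=> hP hh.
have e : \sum_(k < K | P k) h k = - \sum_(k < K | P k) h k.
  rewrite {1}(reindex_inj rev_ord_inj) /= -sumrN.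
  under eq_bigl do rewrite hP.
  by apply: eq_bigr => k hk; rewrite hh.
lra.
Qed.
End W.
End Gen.

Section Concrete.
Variable R : realType.

Lemma m_rev N (k : 'I_N.*2.+1) :
  ((rev_ord k : nat)%:Z - N%:Z = - (k%:Z - N%:Z))%R.
Proof. rewrite /=; move: (nat_of_ord k) (ltn_ord k) => kk; rewrite -addnn; lia. Qed.

Lemma modzN2 (m : int) : ((- m) %% 2)%Z = (m %% 2)%Z.
Proof. by rewrite -(modzMDl (- m) m 2); congr (modz _ _); ring. Qed.

Lemma inMN (lam : R) i m : inM lam i (- m) = inM lam i m.
Proof. by rewrite /inM modzN2 intrN normrN. Qed.

Lemma wlamN (phi : R -> R) lam m : wlam phi lam (- m) = wlam phi lam m.
Proof. by rewrite /wlam /omega intrN mulNr normrN. Qed.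

Theorem prop_main (phi : R -> R)
  (phi_pos : forall x : R, 0 <= x <= 1 -> 0 < phi x <= 1)
  (phi_noninc : forall x y : R, 0 <= x -> x <= y -> y <= 1 -> phi y <= phi x)
  (phi0 : phi 0 = 1)
  (d : nat) (d_even : ~~ odd d)
  (lam : R) (lam_pos : 0 < lam) (lam_notnat : forall n : nat, lam != n%:R)
  (hd : (d%:Z <= -2 + 2 * Num.floor ((lam + 1) / 2))%R) :
  forall f : int -> R,
    lpr_scheme d phi lam f = lpr_scheme d.+1 phi lam f.
Proof.
move=> f; apply: funext => n; rewrite /lpr_scheme.
move: (n %% 2)%Z (n %/ 2)%Z => i j.
set N := Nbound lam.
pose P := fun k : 'I_N.*2.+1 => inM lam i (k%:Z - N%:Z).
pose w := fun k : 'I_N.*2.+1 => wlam phi lam (k%:Z - N%:Z).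
pose g := fun k : 'I_N.*2.+1 => f (j + ((k%:Z - N%:Z + i) %/ 2)%Z).
pose x := fun k : 'I_N.*2.+1 => ((k%:Z - N%:Z)%:~R : R).
have Ec : forall p, lpr_cost phi lam f i j p = wcost P w g x p by [].
have hF : forall a b, lpr_cost phi lam f i j (ev a + od b) =
   lpr_cost phi lam f i j (ev a) + lpr_cost phi lam f i j (od b)
   - lpr_cost phi lam f i j 0.
  move=> a b; rewrite !Ec wcost_cross.
  rewrite (@sum_odd _ _ P (fun k => w k * ((ev a).[x k] * (od b).[x k]))).
  - by rewrite mulr0 addr0.
  - by move=> k; rewrite /P m_rev inMN.
  - move=> k _; rewrite /w /x m_rev wlamN intrN ev_sym od_sym; ring.
have Fq : quadratic (lpr_cost phi lam f i j).
  have [B [l [g0 [H1 H2 H3 H4]]]] := wcost_quad P w g x.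
  by exists B, l, g0; split => // p; rewrite Ec.
have Fpos : forall p, 0 <= lpr_cost phi lam f i j p.
  move=> p; rewrite Ec; apply: wcost_ge0 => k.
  rewrite /P /w /inM /wlam /omega => /andP [_ hk].
  have hx : `|(k%:Z - N%:Z)%:~R / lam| <= 1.
    rewrite normrM normfV (gtr0_norm lam_pos) ler_pdivrMr // mul1r.
    exact: ltW.
  have h01 : 0 <= `|(k%:Z - N%:Z)%:~R / lam| <= 1 by rewrite normr_ge0 hx.
  have /andP [h _] := phi_pos _ h01.
  rewrite hx.
  exact: ltW.
have E := sets_eq hF Fq Fpos d_even.
by congr (xget 0 _); exact: E.
Qed.
End Concrete.

Unset Implicit Arguments.
Set Strict Implicit.
Theorem proposition3p7 (R : realType) (phi : R -> R)
  (phi_pos : forall x : R, 0 <= x <= 1 -> 0 < phi x <= 1)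
  (phi_noninc : forall x y : R, 0 <= x -> x <= y -> y <= 1 -> phi y <= phi x)
  (phi0 : phi 0 = 1)
  (d : nat) (d_even : ~~ odd d)
  (lam : R) (lam_pos : 0 < lam) (lam_notnat : forall n : nat, lam != n%:R)
  (hd : (d%:Z <= -2 + 2 * Num.floor ((lam + 1) / 2))%R) :
  forall f : int -> R,
    lpr_scheme d phi lam f = lpr_scheme d.+1 phi lam f.
Proof. exact: (@prop_main R phi phi_pos phi_noninc phi0 d d_even lam lam_pos lam_notnat hd). Qed.
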